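(* Let $k$ be a commutative ring and $A$ a commutative $k$-algebra such that $\operatorname{Der}_k(A)$ is a finitely generated $A$-module and $\operatorname{Ider}_k(A)=\operatorname{Der}_k(A)$. Then for each integer $m\ge1$, every Hasse–Schmidt derivation $D'\in\operatorname{HS}_k(A;m)$ is $(m+1)$-integrable, i.e. there exists $D\in\operatorname{HS}_k(A;m+1)$ with $\tau_{m+1,m}(D)=D'$; consequently every $D'\in\operatorname{HS}_k(A;m)$ is integrable (is the truncation of some element of $\operatorname{HS}_k(A;\infty)$).
   Context: For $m\ge1$ an integer or $m=\infty$, a Hasse–Schmidt derivation of $A$ over $k$ of length $m$ is a sequence $D=(D_0,\dots,D_m)$ of $k$-linear maps $A\to A$ with $D_0=\mathrm{Id}_A$ and $D_i(xy)=\sum_{r+s=i}D_r(x)D_s(y)$; their set is $\operatorname{HS}_k(A;m)$. For $m\le q$, $\tau_{qm}(D)=(D_0,\dots,D_m)$. A derivation $\delta\in\operatorname{Der}_k(A)$ is integrable if $\delta=D_1$ for some $D\in\operatorname{HS}_k(A;\infty)$; $\operatorname{Ider}_k(A)$ denotes the set of integrable derivations. An element $D'\in\operatorname{HS}_k(A;m)$ is $q$-integrable ($q\ge m$) if $D'=\tau_{qm}(D)$ for some $D\in\operatorname{HS}_k(A;q)$. *)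

(* Defs.v *)
From HB Require Import structures.
From mathcomp Require Import all_boot all_order all_algebra.
Set Implicit Arguments. Unset Strict Implicit. Unset Printing Implicit Defensive.
Import GRing.Theory.
Local Open Scope ring_scope.

(* A commutative k-algebra A is given by its structure morphism
   phi : k -> A (a ring morphism between commutative rings).
   k-linearity of f : A -> A means additivity and f (phi a * x) = phi a * f x. *)
Definition klinear (k A : comPzRingType) (phi : {rmorphism k -> A})
    (f : A -> A) : Prop :=
  (forall x y : A, f (x + y) = f x + f y) /\
  (forall (a : k) (x : A), f (phi a * x) = phi a * f x).

Definition isDer (k A : comPzRingType) (phi : {rmorphism k -> A})
    (d : A -> A) : Prop :=
  klinear phi d /\ (forall x y : A, d (x * y) = x * d y + d x * y).

(* A Hasse-Schmidt derivation of length m is represented by a sequence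
   D : nat -> (A -> A) of which only the components D 0, ..., D m matter. *)
Definition isHS (k A : comPzRingType) (phi : {rmorphism k -> A}) (m : nat)
    (D : nat -> A -> A) : Prop :=
  (forall x, D 0%N x = x) /\
  (forall i, (i <= m)%N -> klinear phi (D i)) /\
  (forall i, (i <= m)%N -> forall x y : A,
      D i (x * y) = \sum_(r < i.+1) D r x * D (i - r)%N y).

Definition isHSinf (k A : comPzRingType) (phi : {rmorphism k -> A})
    (D : nat -> A -> A) : Prop :=
  (forall x, D 0%N x = x) /\
  (forall i, klinear phi (D i)) /\
  (forall i (x y : A), D i (x * y) = \sum_(r < i.+1) D r x * D (i - r)%N y).

Definition truncates_to (A : Type) (m : nat) (D D' : nat -> A -> A) : Prop :=
  forall i, (i <= m)%N -> forall x, D i x = D' i x.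

Definition Der_fg (k A : comPzRingType) (phi : {rmorphism k -> A}) : Prop :=
  exists (n : nat) (g : 'I_n -> A -> A),
    (forall j, isDer phi (g j)) /\
    (forall d, isDer phi d ->
       exists c : 'I_n -> A, forall x, d x = \sum_(j < n) c j * g j x).

Definition all_Der_integrable (k A : comPzRingType) (phi : {rmorphism k -> A})
    : Prop :=
  forall d, isDer phi d ->
    exists D, isHSinf phi D /\ forall x, D 1%N x = d x.

(* Main.v *)
Require Import Defs.
From HB Require Import structures.
From mathcomp Require Import all_boot all_order all_algebra.
Set Implicit Arguments. Unset Strict Implicit. Unset Printing Implicit Defensive.
Import GRing.Theory.
Local Open Scope ring_scope.

Section Sp.
Variable A : comPzRingType.

Definition sp (n : nat) (g : nat -> nat -> A) : A := \sum_(a < n.+1) g a (n - a)%N.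

Lemma eq_sp n f g : (forall a, (a <= n)%N -> f a (n - a)%N = g a (n - a)%N) -> sp n f = sp n g.
Proof. by move=> H; apply: eq_bigr => a _; apply: H; rewrite -ltnS. Qed.

Lemma sp0 g : sp 0%N g = g 0%N 0%N.
Proof. by rewrite /sp big_ord1. Qed.

Lemma spS n g : sp n.+1 g = sp n (fun a b => g a b.+1) + g n.+1 0%N.
Proof.
rewrite /sp big_ord_recr /= subnn; congr (_ + _).
by apply: eq_bigr => a _ /=; rewrite subSn // -ltnS.
Qed.

Lemma spD n f g : sp n (fun a b => f a b + g a b) = sp n f + sp n g.
Proof. by rewrite /sp big_split. Qed.

Lemma sp_comm n g : sp n g = sp n (fun a b => g b a).
Proof.
rewrite /sp (reindex_inj rev_ord_inj) /=; apply: eq_bigr => a _.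
by rewrite subSS subKn // -ltnS.
Qed.

Lemma sp_assoc n (h : nat -> nat -> nat -> A) :
  sp n (fun a b => sp a (fun c d => h c d b)) = sp n (fun a b => sp b (fun c d => h a c d)).
Proof.
elim: n h => [|n IH] h.
  by rewrite /sp !big_ord1.
rewrite spS /= (IH (fun c d b => h c d b.+1)) [in RHS]spS /= sp0.
have -> : sp n (fun a b => sp b.+1 (fun c d => h a c d)) =
   sp n (fun a b => sp b (fun c d => h a c d.+1)) + sp n (fun a b => h a b.+1 0%N).
  by rewrite -spD; apply: eq_sp => a _; rewrite spS.
by rewrite spS /= addrA.
Qed.

Lemma sp_mul n d f g :
  sp n f * sp d g = sp n (fun p u => sp d (fun q v => f p u * g q v)).
Proof.
rewrite /sp mulr_suml; apply: eq_bigr => a _; by rewrite mulr_sumr.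
Qed.

Lemma sp_reindex n (T : nat -> nat -> nat -> nat -> A) :
  sp n (fun c d => sp c (fun p u => sp d (fun q v => T p u q v))) =
  sp n (fun r s => sp s (fun u v => sp r (fun p q => T p u q v))).
Proof.
rewrite (sp_assoc n (fun p u d => sp d (fun q v => T p u q v))).
transitivity (sp n (fun p t => sp t (fun w v => sp w (fun q u => T p u q v)))).
  apply: eq_sp => p _.
  rewrite -(sp_assoc _ (fun u q v => T p u q v)).
  by apply: eq_sp => w _; rewrite sp_comm.
rewrite -(sp_assoc n (fun p w v => sp w (fun q u => T p u q v))).
transitivity (sp n (fun z v => sp z (fun e u => sp e (fun p q => T p u q v)))).
  apply: eq_sp => z _.
  by rewrite -(sp_assoc _ (fun p q u => T p u q (n - z)%N)).
by rewrite (sp_assoc n (fun e u v => sp e (fun p q => T p u q v))).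
Qed.

Lemma sp_zeros i (g : nat -> A) : (0 < i)%N ->
  (forall r, (0 < r < i)%N -> g r = 0) -> \sum_(r < i.+1) g r = g 0%N + g i.
Proof.
case: i => // i _ H.
rewrite big_ord_recl big_ord_recr /= big1 ?add0r // => a _.
by apply: H; rewrite /= ltnS ltn_ord.
Qed.

Lemma elim1 N c (F : 'I_N -> A) (g : nat -> A) :
  (forall a : 'I_N, F a = if (a == c :> nat) then g c else 0) ->
  \sum_(a < N) F a = if (c < N)%N then g c else 0.
Proof.
move=> HF; rewrite (eq_bigr _ (fun a _ => HF a)) -big_mkcond.
case: ltnP => h.
  by rewrite (big_pred1 (Ordinal h)) // => a.
by rewrite big_pred0 // => a; apply/negbTE; apply: contraTneq h => <-; rewrite -ltnNge.
Qed.

End Sp.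

Section Ops.
Variables (k A : comPzRingType) (phi : {rmorphism k -> A}).

Lemma kl_ext f g : (forall x, f x = g x) -> klinear phi g -> klinear phi f.
Proof. by move=> e [H1 H2]; split=> *; rewrite !e ?H1 ?H2. Qed.

Lemma kl0 f : klinear phi f -> f 0 = 0.
Proof. by move=> [H1 _]; apply: (addrI (f 0)); rewrite addr0 -H1 addr0. Qed.

Lemma kl_sum f n (F : 'I_n -> A) : klinear phi f -> f (\sum_(i < n) F i) = \sum_(i < n) f (F i).
Proof. by move=> H; apply: (big_morph f H.1 (kl0 H)). Qed.

Lemma kl_sp f n g : klinear phi f -> f (sp n g) = sp n (fun a b => f (g a b)).
Proof. by move=> H; rewrite /sp kl_sum. Qed.

Lemma kl_id : klinear phi id.
Proof. by []. Qed.

Lemma kl_zero : klinear phi (fun _ => 0).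
Proof. by split=> *; rewrite ?addr0 ?mulr0. Qed.

Lemma kl_comp f g : klinear phi f -> klinear phi g -> klinear phi (fun x => f (g x)).
Proof. by move=> [F1 F2] [G1 G2]; split=> *; rewrite ?G1 ?F1 ?G2 ?F2. Qed.

Lemma kl_opp f : klinear phi f -> klinear phi (fun x => - f x).
Proof. by move=> [F1 F2]; split=> *; rewrite ?F1 ?F2 ?opprD ?mulrN. Qed.

Lemma kl_bsum n (F : 'I_n -> A -> A) : (forall i, klinear phi (F i)) ->
  klinear phi (fun x => \sum_(i < n) F i x).
Proof.
move=> H; split=> *.
  by rewrite -big_split; apply: eq_bigr => i _; rewrite (H i).1.
by rewrite mulr_sumr; apply: eq_bigr => i _; rewrite (H i).2.
Qed.

Definition hscomp (F G : nat -> A -> A) : nat -> A -> A :=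
  fun i x => sp i (fun r s => F r (G s x)).

Definition idHS : nat -> A -> A := fun i x => if i == 0%N then x else 0.

Lemma HSinfP D : isHSinf phi D <-> forall m, isHS phi m D.
Proof.
split=> [[H0 [H1 H2]] m|H]; first by split; [|split=> i _; [apply: H1|apply: H2]].
split; first by case: (H 0%N).
split=> i; first by case: (H i) => _ [/(_ i (leqnn i))].
by case: (H i) => _ [_ /(_ i (leqnn i))].
Qed.

Lemma leib m D i x y : isHS phi m D -> (i <= m)%N ->
  D i (x * y) = sp i (fun r s => D r x * D s y).
Proof. by move=> [_ [_ H]] /H; apply. Qed.

Lemma leibinf D i x y : isHSinf phi D ->
  D i (x * y) = sp i (fun r s => D r x * D s y).
Proof. by move=> [_ [_ H]]; apply: H. Qed.

Lemma comp_klin F G i : (forall r, (r <= i)%N -> klinear phi (F r)) ->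
  (forall r, (r <= i)%N -> klinear phi (G r)) -> klinear phi (hscomp F G i).
Proof.
move=> HF HG; rewrite /hscomp /sp.
apply: (kl_bsum (F := fun (a : 'I_i.+1) x => F a (G (i - a)%N x))) => a.
by apply: kl_comp; [apply: HF; rewrite -ltnS | apply: HG; rewrite leq_subr].
Qed.

Lemma hsreindex (F G : nat -> A -> A) x y i :
  sp i (fun c d => hscomp F G c x * hscomp F G d y) =
  sp i (fun r s => sp s (fun u v => sp r (fun p q => F p (G u x) * F q (G v y)))).
Proof.
rewrite -sp_reindex; apply: eq_sp => c _; by rewrite /hscomp sp_mul.
Qed.

Lemma comp_HS m F G : isHS phi m F -> isHS phi m G -> isHS phi m (hscomp F G).
Proof.
move=> HF HG; split.
  by move=> x; rewrite /hscomp sp0 HG.1 HF.1.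
split=> [i him|i him x y].
  apply: comp_klin => r hr; [apply: HF.2.1|apply: HG.2.1]; exact: leq_trans him.
change (hscomp F G i (x * y) = sp i (fun c d => hscomp F G c x * hscomp F G d y)).
rewrite hsreindex /hscomp.
apply: eq_sp => r hr.
rewrite (leib _ _ HG); last by rewrite (leq_trans (leq_subr _ _)).
rewrite kl_sp; last by apply: HF.2.1; apply: leq_trans him.
apply: eq_sp => u hu.
by rewrite (leib _ _ HF) // (leq_trans hr).
Qed.

Lemma idHS_HS : isHSinf phi idHS.
Proof.
apply/HSinfP => m; split=> //; split=> [i _|i _ x y].
  by rewrite /idHS; case: (i == 0%N); [apply: kl_id | apply: kl_zero].
rewrite /sp /idHS; case: i => [|i] /=; first by rewrite big_ord1.
rewrite big1 // => a _; case: (nat_of_ord a == 0%N) / eqP => [->|]; last by rewrite mul0r.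
by rewrite subn0 /= mulr0.
Qed.

Lemma comp_id F i x : (forall r, (r <= i)%N -> klinear phi (F r)) -> hscomp F idHS i x = F i x.
Proof.
move=> HF; rewrite /hscomp /sp big_ord_recr /= subnn /= big1 ?add0r // => a _.
rewrite /idHS subn_eq0 leqNgt ltn_ord /=; apply: kl0; apply: HF.
by apply: ltnW.
Qed.

Lemma comp_assoc F G H i x : (forall r, (r <= i)%N -> klinear phi (F r)) ->
  hscomp (hscomp F G) H i x = hscomp F (hscomp G H) i x.
Proof.
move=> HF; rewrite /hscomp.
rewrite (sp_assoc i (fun p q s => F p (G q (H s x)))).
by apply: eq_sp => p hp; rewrite kl_sp //; apply: HF.
Qed.

Lemma comp_eql F F' G i x : (forall r, (r <= i)%N -> forall z, F r z = F' r z) ->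
  hscomp F G i x = hscomp F' G i x.
Proof. by move=> e; apply: eq_sp => r hr; rewrite e. Qed.

Lemma comp_eqr F G G' i x : (forall r, (r <= i)%N -> forall z, G r z = G' r z) ->
  hscomp F G i x = hscomp F G' i x.
Proof. by move=> e; apply: eq_sp => r hr; rewrite e // leq_subr. Qed.

End Ops.

Section Inv.
Variables (k A : comPzRingType) (phi : {rmorphism k -> A}).
Variable H : nat -> A -> A.

Fixpoint invS (i : nat) : nat -> A -> A :=
  match i with
  | 0%N => fun j x => x
  | i'.+1 => fun j x => if (j <= i')%N then invS i' j x
                        else - \sum_(a < i'.+1) invS i' a (H (i'.+1 - a)%N x)
  end.

Definition hsinv : nat -> A -> A := fun j => invS j j.

Lemma invS_stable i j x : (j <= i)%N -> invS i j x = hsinv j x.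
Proof.
elim: i => [|i IH] hj; first by move: hj; rewrite leqn0 => /eqP ->.
rewrite /=; case: ifP => h; first exact: IH.
have -> : j = i.+1 by apply/eqP; rewrite eqn_leq hj leqNgt ltnS h.
by rewrite /hsinv /= ltnn.
Qed.

Lemma inv0 x : hsinv 0 x = x. Proof. by []. Qed.

Lemma inv_rec i x : hsinv i.+1 x = - \sum_(a < i.+1) hsinv a (H (i.+1 - a)%N x).
Proof.
rewrite /hsinv /= ltnn; congr (- _); apply: eq_bigr => a _.
by rewrite invS_stable // -ltnS.
Qed.

Hypothesis HH : isHSinf phi H.

Lemma inv_left i x : hscomp hsinv H i x = idHS i x.
Proof.
case: i => [|i]; first by rewrite /hscomp sp0 inv0 HH.1.
rewrite /hscomp /sp big_ord_recr /= subnn HH.1 inv_rec.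
by rewrite /idHS /= subrr.
Qed.

Lemma inv_klin i : klinear phi (hsinv i).
Proof.
elim/ltn_ind: i => [[|i]] IH; first exact: kl_id.
apply: (kl_ext (fun x => inv_rec i x)); apply: kl_opp.
apply: (kl_bsum (F := fun (a : 'I_i.+1) x => hsinv a (H (i.+1 - a)%N x))) => a.
by apply: kl_comp; [apply: IH | apply: HH.2.1].
Qed.

Lemma inv_leib i x y : hsinv i (x * y) = sp i (fun r s => hsinv r x * hsinv s y).
Proof.
elim/ltn_ind: i x y => [[|i]] IH x y; first by rewrite sp0.
have R := hsreindex hsinv H x y i.+1.
have L : sp i.+1 (fun c d => hscomp hsinv H c x * hscomp hsinv H d y) = 0.
  rewrite (eq_sp (g := fun c d => idHS c x * idHS d y)); last first.
    by move=> a _; rewrite !inv_left.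
  have [_ [_ L]] := idHS_HS phi.
  by rewrite -[sp _ _]/(\sum_(r < i.+2) idHS r x * idHS (i.+1 - r)%N y) -L.
rewrite L spS /= sp0 in R.
have E1 : sp i (fun a b => sp b.+1 (fun u v => sp a (fun p q => hsinv p (H u x) * hsinv q (H v y))))
     = - hsinv i.+1 (x * y).
  rewrite inv_rec opprK {1}/sp; apply: eq_bigr => a _.
  have ha : (a <= i)%N by rewrite -ltnS.
  rewrite subSn // (leibinf _ _ _ HH) (kl_sp _ _ (inv_klin a)).
  by apply: eq_sp => u _; rewrite IH // ltnS.
rewrite E1 !HH.1 in R.
by move/esym/eqP: R; rewrite addrC subr_eq0 => /eqP ->.
Qed.

Lemma inv_HS : isHSinf phi hsinv.
Proof.
split=> //; split=> i; first exact: inv_klin.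
exact: inv_leib.
Qed.

End Inv.

Section Subst.
Variables (k A : comPzRingType) (phi : {rmorphism k -> A}).

Lemma sp_mult n j (f : nat -> nat -> A) : (0 < n)%N ->
  sp (j * n) (fun r s => if ((n %| r) && (n %| s))%N then f (r %/ n)%N (s %/ n)%N else 0)
  = sp j f.
Proof.
move=> hn; rewrite {1}/sp.
transitivity (\sum_(r < (j * n).+1) \sum_(a < j.+1)
                 (if (r == (a * n)%N :> nat) then f a (j - a)%N else 0)).
  apply: eq_bigr => r _.
  have hr : (r <= j * n)%N := ltn_ord r.
  case: (boolP (n %| r)%N) => dr.
    have e : nat_of_ord r = (r %/ n * n)%N by rewrite divnK.
    have ds : (n %| j * n - r)%N by rewrite dvdn_sub ?dvdn_mull.
    rewrite ds /=.
    have -> : ((j * n - r) %/ n = j - r %/ n)%N by rewrite {1}e -mulnBl mulnK.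
    symmetry; rewrite (@elim1 _ _ (r %/ n)%N _ (fun a => f a (j - a)%N)).
      by rewrite ltnS leq_divLR // hr.
    move=> a; rewrite {1}e eqn_pmul2r // eq_sym.
    by case: eqP => [->|].
  rewrite /=; symmetry; apply: big1 => a _.
  case: eqP => // e; move: dr; by rewrite e dvdn_mull.
rewrite exchange_big /=; apply: eq_bigr => a _.
rewrite (@elim1 _ _ (a * n)%N _ (fun _ => f a (j - a)%N)) //.
  by rewrite ltnS leq_mul2r -ltnS ltn_ord orbT.
Qed.

Definition subst (n : nat) (E : nat -> A -> A) : nat -> A -> A :=
  fun i x => if (n %| i)%N then E (i %/ n)%N x else 0.

Lemma subst_HS n E : (0 < n)%N -> isHSinf phi E -> isHSinf phi (subst n E).
Proof.
move=> hn HE; split; first by move=> x; rewrite /subst dvdn0 div0n HE.1.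
split=> i.
  by rewrite /subst; case: (n %| i)%N; [apply: HE.2.1 | apply: kl_zero].
move=> x y.
change (subst n E i (x * y) = sp i (fun r s => subst n E r x * subst n E s y)).
case: (boolP (n %| i)%N) => di.
  have e : i = (i %/ n * n)%N by rewrite divnK.
  rewrite /subst di (leibinf _ _ _ HE) [in RHS]e -(sp_mult _ _ hn).
  apply: eq_sp => r _.
  by case: (n %| r)%N; case: (n %| _)%N; rewrite /= ?mul0r ?mulr0.
rewrite /subst (negbTE di); symmetry; apply: big1 => r _.
have hr : (r <= i)%N := ltn_ord r.
case: ifP => d1; last by rewrite mul0r.
case: ifP => d2; last by rewrite mulr0.
have : (n %| i)%N by rewrite -(subnKC hr) (dvdn_addr _ d1) d2.
by rewrite (negbTE di).
Qed.

End Subst.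

Section Main.
Variables (k A : comPzRingType) (phi : {rmorphism k -> A}).
Variable m : nat.

Lemma der_of D n : isHS phi m D -> (0 < n)%N -> (n <= m)%N ->
  (forall i, (0 < i < n)%N -> forall x, D i x = 0) -> isDer phi (D n).
Proof.
move=> HD hn hnm Hz; split; first exact: HD.2.1.
move=> x y; rewrite (leib _ _ HD hnm) /sp (sp_zeros (g := fun r => D r x * D (n - r)%N y)) //.
  by rewrite subn0 subnn !HD.1.
by move=> r hr; rewrite Hz ?mul0r.
Qed.

Lemma base D : isHS phi m D -> (forall i, (0 < i <= m)%N -> forall x, D i x = 0) ->
  exists G, isHSinf phi G /\ truncates_to m G D.
Proof.
move=> HD Hz; exists (@idHS A); split; first exact: idHS_HS.
move=> [|i] hi x; first by rewrite HD.1.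
by rewrite Hz.
Qed.

Hypothesis Hint : all_Der_integrable phi.

Lemma stepS d : forall n, (0 < n)%N -> (m.+1 - n <= d)%N ->
  forall D, isHS phi m D -> (forall i, (0 < i < n)%N -> forall x, D i x = 0) ->
  exists G, isHSinf phi G /\ truncates_to m G D.
Proof.
elim: d => [|d IH] n hn hd D HD Hz.
  apply: base => // i /andP[h1 h2] x; apply: Hz; rewrite h1 /=.
  by move: hd; rewrite leqn0 subn_eq0 => /(leq_trans _); apply; rewrite ltnS.
case: (ltnP m n) => hmn.
  apply: base => // i /andP[h1 h2] x; apply: Hz; rewrite h1 /=.
  exact: leq_ltn_trans hmn.
have Hder := der_of HD hn hmn Hz.
have [E [HE E1]] := Hint Hder.
pose H := subst n E.
have HH : isHSinf phi H := subst_HS hn HE.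
pose Hs := hsinv H.
have HHs : isHSinf phi Hs := inv_HS HH.
pose F := hscomp D Hs.
have HF : isHS phi m F := comp_HS HD ((HSinfP _ _).1 HHs m).
have FH : forall i, (i <= m)%N -> forall x, hscomp F H i x = D i x.
  move=> i hi x.
  have kD : forall r, (r <= i)%N -> klinear phi (D r).
    by move=> r hr; apply: HD.2.1; apply: leq_trans hi.
  rewrite /F (comp_assoc (phi:=phi)); last exact: kD.
  rewrite (@comp_eqr _ _ _ (@idHS A)) ?(comp_id (phi:=phi)) //.
  all: try exact: kD.
  by move=> r _ z; apply: (inv_left HH).
have Fz : forall i, (i <= n)%N -> forall r, (0 < r <= i)%N -> forall z, F r z = 0.
  elim=> [|i IHi] hi r /andP[hr1 hr2] z.
    by move: hr1 hr2; case: r.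
  case: (ltnP i r) => hri; last first.
    by apply: IHi => //; [apply: ltnW | rewrite hr1].
  have er : r = i.+1 by apply/eqP; rewrite eqn_leq hr2 hri.
  rewrite er.
  have := FH i.+1 (leq_trans hi hmn) z.
  rewrite /hscomp /sp (sp_zeros (g := fun r => F r (H (i.+1 - r)%N z))) //; last first.
    by move=> a /andP[a1 a2]; apply: IHi => //; [apply: ltnW | rewrite a1 -ltnS].
  rewrite subn0 subnn HF.1 HH.1.
  rewrite /H /subst.
  case: (ltnP i.+1 n) => hin.
    have nd : (n %| i.+1)%N = false.
      by apply/negbTE; apply/negP => /(dvdn_leq (ltn0Sn _)); rewrite leqNgt hin.
    by rewrite nd add0r Hz // hin.
  have en : i.+1 = n by apply/eqP; rewrite eqn_leq hi hin.
  rewrite en dvdnn divnn hn E1 => e.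
  by apply: (addrI (D n z)); rewrite e addr0.
have Fz' : forall i, (0 < i < n.+1)%N -> forall x, F i x = 0.
  move=> i /andP[h1 h2] x; apply: (Fz n) => //; by rewrite h1.
have hd' : (m.+1 - n.+1 <= d)%N.
  by move: hd; rewrite subSS subSn.
have [G [HG GF]] := IH n.+1 (ltn0Sn _) hd' F HF Fz'.
exists (hscomp G H); split.
  apply/HSinfP => m'; apply: comp_HS; exact: (HSinfP _ _).1.
move=> i hi x; rewrite -FH //; apply: comp_eql => r hr z.
by apply: GF; apply: leq_trans hi.
Qed.

End Main.

Close Scope ring_scope.

Theorem mainTheorem2 (k A : comPzRingType) (phi : {rmorphism k -> A}) :
  Der_fg phi -> all_Der_integrable phi ->
  forall m : nat, (1 <= m)%N ->
  forall D' : nat -> A -> A, isHS phi m D' ->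
    (exists D, isHS phi m.+1 D /\ truncates_to m D D') /\
    (exists D, isHSinf phi D /\ truncates_to m D D').
Proof.
move=> _ Hint m hm D' HD.
have hd : (m.+1 - 1 <= m)%N by rewrite subn1.
have Hz : forall i, (0 < i < 1)%N -> forall x, D' i x = 0%R.
  by move=> [|i].
have [G [HG GD]] := @stepS k A phi m Hint m 1%N (ltn0Sn 0) hd D' HD Hz.
split; exists G; split => //.
exact: (HSinfP _ _).1 HG m.+1.
Qed.
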